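(* Let $X$ be a completely regular Hausdorff space and let $A(X)$ be an adequate subspace of $C(X)$, with $A(X)$-compactification $\mathcal{A}X$. Let $x_0\in\mathcal{A}X$, $f\in A(X)$, and let $U$ be a neighborhood of $x_0(f)$ in $[-\infty,\infty]$; set $V=\{x\in\mathcal{A}X: x(f)\in U\}$. Then there exists $h\in A(X)$ with $0\le h\le 1_X$ and $x_0(h)=0$ such that $W=\{x\in\mathcal{A}X: x(h)<1\}\subseteq V$.
   Context: All functions are real-valued; $C(X)$ is the space of continuous real functions on $X$ and $1_X$ the constant function $1$. A subspace $A(X)\subseteq C(X)$ separates points from closed sets if for every $x\in X$ and closed $F\subseteq X$ with $x\notin F$ there is $f\in A(X)$ with $f(x)=1$ and $f=0$ on $F$. $A(X)$ is adequate if (a) it separates points from closed sets and contains the constant functions; (b) there is a continuous nondecreasing $g:\mathbb{R}\to\mathbb{R}$ with $g(t)=0$ for $t\le 0$ and $g(t)=1$ for $t\ge1$ such that $g\circ f\in A(X)$ for all $f\in A(X)$; (c) every $f\in A(X)$ can be written $f=f_1-f_2$ with $f_1,f_2\in A(X)$ nonnegative. The $A(X)$-compactification: let $[-\infty,\infty]$ carry the order topology; the map $i:X\to[-\infty,\infty]^{A(X)}$, $i(x)(\varphi)=\varphi(x)$, is a homeomorphic embedding; $\mathcal{A}X$ is the closure of $i(X)$ in the product $[-\infty,\infty]^{A(X)}$ (a compact Hausdorff space), and $X$ is identified with $i(X)\subseteq\mathcal{A}X$. Points $x\in\mathcal{A}X$ are functions on $A(X)$, and $x(f)$ denotes the value at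 $f$; the map $\hat f:\mathcal{A}X\to[-\infty,\infty]$, $\hat f(x)=x(f)$, is the unique continuous extension of $f$. *)

(* Defs.v *)
From HB Require Import structures.
From mathcomp Require Import all_boot all_order all_algebra.
From mathcomp Require Import all_classical all_reals all_analysis.
Set Implicit Arguments. Unset Strict Implicit. Unset Printing Implicit Defensive.
Import Order.TTheory GRing.Theory Num.Theory numFieldNormedType.Exports.
Local Open Scope classical_set_scope.
Local Open Scope ring_scope.

Definition subspace_of_C (R : realType) (X : topologicalType)
  (A : set (X -> R)) : Prop :=
  [/\ (forall f, A f -> continuous f),
      A (fun _ => 0),
      (forall f g, A f -> A g -> A (f \+ g)) &
      (forall (c : R) f, A f -> A (fun x => c * f x))].

Definition separates_points_closed (R : realType) (X : topologicalType)
  (A : set (X -> R)) : Prop :=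
  forall (x : X) (F : set X), closed F -> ~ F x ->
    exists2 f, A f & f x = 1 /\ (forall y, F y -> f y = 0).

Definition adequate (R : realType) (X : topologicalType)
  (A : set (X -> R)) : Prop :=
  [/\ separates_points_closed A /\ (forall c : R, A (fun _ => c)),
      (exists g : R -> R, [/\ continuous g, {homo g : s t / s <= t},
          (forall t, t <= 0 -> g t = 0), (forall t, 1 <= t -> g t = 1) &
          (forall f, A f -> A (g \o f))]) &
      (forall f, A f -> exists f1 f2, [/\ A f1, A f2,
          (forall x, 0 <= f1 x), (forall x, 0 <= f2 x) &
          f = f1 \- f2])].

Definition Aidx (R : realType) (X : topologicalType) (A : set (X -> R)) :=
  {f : X -> R | A f}.

Definition Aeval (R : realType) (X : topologicalType) (A : set (X -> R))
  (x : X) : {ptws Aidx A -> \bar R} :=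
  fun f => ((proj1_sig f) x)%:E.

Definition Acompact (R : realType) (X : topologicalType) (A : set (X -> R))
  : set {ptws Aidx A -> \bar R} :=
  closure (range (@Aeval R X A)).
Arguments Acompact {R X} A _.
Arguments Aeval {R X} A x _.

(* Main.v *)
Require Import Defs.
From HB Require Import structures.
From mathcomp Require Import all_boot all_order all_algebra.
From mathcomp Require Import all_classical all_reals all_analysis.
From mathcomp Require Import ring lra.
Import Order.TTheory GRing.Theory Num.Theory numFieldNormedType.Exports.
Local Open Scope classical_set_scope.
Local Open Scope ring_scope.

Section S.
Variable R : realType.
Definition extH (H : R -> R) (cL cR : R) (y : \bar R) : \bar R :=
  match y with EFin r => (H r)%:E | +oo%E => cR%:E | -oo%E => cL%:E end.

Lemma extH_cont (H : R -> R) cL cR a b : continuous H ->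
  (forall t, t <= a -> H t = cL) -> (forall t, b <= t -> H t = cR) ->
  continuous (extH H cL cR).
Proof.
move=> cH HL HR [r| |].
- move=> B /= HB. exact: (cH r _ HB).
- move=> B /= HB; exists b; split; first exact: num_real.
  move=> [t| |] //= bt; last exact: nbhs_singleton.
  by rewrite HR ?ltW //; apply: nbhs_singleton.
- move=> B /= HB; exists a; split; first exact: num_real.
  move=> [t| |] //= bt; last exact: nbhs_singleton.
  by rewrite HL ?ltW //; apply: nbhs_singleton.
Qed.

Section C.
Variables (X : topologicalType) (A : set (X -> R)).
HB.instance Definition _ := gen_eqMixin (Aidx A).
Lemma closure_fun (phi psi : Aidx A)
  (H : R -> R) cL cR a b : continuous H ->
  (forall t, t <= a -> H t = cL) -> (forall t, b <= t -> H t = cR) ->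
  (forall y, proj1_sig psi y = H (proj1_sig phi y)) ->
  forall x, Acompact A x -> x psi = extH H cL cR (x phi).
Proof.
move=> cH HL HR Hpsi x Hx; apply: ereal_hausdorff => B C HB HC.
have cE := @extH_cont H cL cR a b cH HL HR.
have N1 : nbhs x ((proj psi) @^-1` B).
  by have := @proj_continuous _ (fun _ => \bar R) psi x; apply.
have N2 : nbhs x ((extH H cL cR \o proj phi) @^-1` C).
  have HC' := cE (x phi) C HC.
  have := @proj_continuous _ (fun _ => \bar R) phi x _ HC'.
  by [].
have N3 := @filterI _ (nbhs x) (nbhs_filter x) _ _ N1 N2.
have [y [[z _ <-] [Bz Cz]]] := Hx _ N3.
exists (Aeval A z psi); split => //.
move: Cz; rewrite /=.
by rewrite /= /Aeval /= -Hpsi.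
Qed.
End C.

Lemma aff_cont (g : R -> R) (gc : continuous g) (c d : R) :
  continuous (fun t => g (c * t + d)).
Proof.
move=> t; apply: continuous_comp; last exact: gc.
by apply: cvgD; [apply: cvgM; [exact: cvg_cst | exact: cvg_id] | exact: cvg_cst].
Qed.
End S.
Arguments extH {R}.
Arguments closure_fun {R X A phi psi H cL cR a b}.
Arguments aff_cont {R g}.


Theorem lemma3p2 (R : realType) (X : topologicalType)
  (HcrX : completely_regular_space X) (HhX : hausdorff_space X)
  (A : set (X -> R)) (HsubA : subspace_of_C A) (HadA : adequate A)
  (x0 : {ptws Aidx A -> \bar R}) (Hx0 : Acompact A x0)
  (f : Aidx A) (U : set (\bar R)) (HU : nbhs (x0 f) U) :
  exists h : Aidx A,
    [/\ (forall x : X, 0 <= proj1_sig h x <= 1),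
        x0 h = 0%E &
        (forall x : {ptws Aidx A -> \bar R},
           Acompact A x -> (x h < 1%:E)%E -> U (x f))].
Proof.
case: HsubA => HcA H0 Hadd Hscal.
case: HadA => [[Hsep Hconst] [g [gc gmono g0 g1 gA]] Hdec].
have gb : forall t, 0 <= g t <= 1.
  move=> t; case: (lerP t 0) => [tn|t0]; first by rewrite g0 // lexx ler01.
  case: (lerP 1 t) => [tn|t1]; first by rewrite g1 // lexx ler01.
  by rewrite -(g0 0) // -(g1 1) // !gmono // ltW.
have Alin : forall c d, A (fun y => g (c * proj1_sig f y + d)).
  move=> c d; exact: (gA _ (Hadd _ _ (Hscal c _ (proj2_sig f)) (Hconst d))).
have build : forall (H : R -> R) cL cR a b, continuous H ->
    (forall t, t <= a -> H t = cL) -> (forall t, b <= t -> H t = cR) ->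
    A (fun y => H (proj1_sig f y)) ->
    exists h : Aidx A, proj1_sig h = (fun y => H (proj1_sig f y)) /\
      forall x, Acompact A x -> x h = extH H cL cR (x f).
  move=> H cL cR a b cH HL HR HA.
  exists (exist _ (fun y => H (proj1_sig f y)) HA); split => //.
  by move=> x Hx; apply: (closure_fun cH HL HR) => // y.
case Ex: (x0 f) HU => [r| |] HU.
- have : nbhs r (fun t => U t%:E) := HU.
  case/nbhs_ballP => e /= e0 He.
  pose k := 2 / e.
  have ke : k * e = 2 by rewrite /k mulrAC -mulrA divff ?mulr1 // gt_eqF.
  have k0 : 0 < k by rewrite /k divr_gt0.
  pose H t := g (k * t + (- (k * r) - 1)) + g ((- k) * t + (k * r - 1)).
  have Hout : forall t, e <= `|r - t| -> H t = 1.
    move=> t; rewrite /H; case: (lerP r t) => rt.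
      move=> et.
      rewrite g1; last by nra.
      by rewrite g0 ?addr0 //; nra.
    move=> et.
    rewrite g0; last by nra.
    by rewrite g1 ?add0r //; nra.
  have HL : forall t, t <= r - e -> H t = 1.
    move=> t tr; apply: Hout; rewrite ger0_norm; lra.
  have HR : forall t, r + e <= t -> H t = 1.
    move=> t tr; apply: Hout; rewrite distrC ger0_norm; lra.
  have cH : continuous H.
    move=> t; apply: cvgD; [exact: (aff_cont gc) | exact: (aff_cont gc)].
  have HA : A (fun y => H (proj1_sig f y)).
    exact: (Hadd _ _ (Alin k _) (Alin (- k) _)).
  have [h [hE hx]] := build H 1 1 _ _ cH HL HR HA.
  exists h; split.
  + move=> y; rewrite hE /H.
    have := gb (k * proj1_sig f y + (- (k * r) - 1)).
    have := gb (- k * proj1_sig f y + (k * r - 1)).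
    case: (lerP (proj1_sig f y) r) => fr.
      rewrite (g0 (k * proj1_sig f y + (- (k * r) - 1))); last by nra.
      by rewrite add0r; lra.
    rewrite (g0 (- k * proj1_sig f y + (k * r - 1))); last by nra.
    by rewrite addr0; lra.
  + rewrite hx // Ex /= /H.
    have -> : k * r + (- (k * r) - 1) = -1 by ring.
    have -> : - k * r + (k * r - 1) = -1 by ring.
    by rewrite !g0 ?addr0 // ler_oppl oppr0.
  + move=> x Hx; rewrite hx //.
    case: (x f) => [s| |] /=; rewrite ?lte_fin ?ltxx //.
    move=> Hs; apply: He; rewrite /ball /=.
    case: (lerP e `|r - s|) => // es.
    by rewrite Hout // ltxx in Hs.
- move: HU => /= [M [_ HM]].
  pose H t := g (-1 * t + (M + 1)).
  have HL : forall t, t <= M -> H t = 1.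
    move=> t tM; rewrite /H g1 //; lra.
  have HR : forall t, M + 1 <= t -> H t = 0.
    move=> t tM; rewrite /H g0 //; lra.
  have [h [hE hx]] := build H 1 0 _ _ (aff_cont gc _ _) HL HR (Alin _ _).
  exists h; split.
  + by move=> y; rewrite hE; apply: gb.
  + by rewrite hx // Ex.
  + move=> x Hx; rewrite hx //.
    case: (x f) => [s| |] /=; rewrite ?lte_fin ?ltxx //.
    * move=> Hs; apply: HM; rewrite lte_fin.
      case: (lerP s M) => // sM.
      by rewrite HL // ltxx in Hs.
    * by move=> _; apply: HM; rewrite ltry.
- move: HU => /= [M [_ HM]].
  pose H t := g (1 * t + (1 - M)).
  have HL : forall t, t <= M - 1 -> H t = 0.
    move=> t tM; rewrite /H g0 //; lra.
  have HR : forall t, M <= t -> H t = 1.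
    move=> t tM; rewrite /H g1 //; lra.
  have [h [hE hx]] := build H 0 1 _ _ (aff_cont gc _ _) HL HR (Alin _ _).
  exists h; split.
  + by move=> y; rewrite hE; apply: gb.
  + by rewrite hx // Ex.
  + move=> x Hx; rewrite hx //.
    case: (x f) => [s| |] /=; rewrite ?lte_fin ?ltxx //.
    * move=> Hs; apply: HM; rewrite lte_fin.
      case: (lerP M s) => // sM.
      by rewrite HR // ltxx in Hs.
    * by move=> _; apply: HM; rewrite ltNyr.
Qed.
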